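(* Let $n$ and $k$ be integers with $2\le k\le n-1$, and let $G$ be a connected graph with $n$ vertices. (a) If $\chi(G)=k$, then $\sigma_0(G)\ge 2-\frac{k-1}{n}$ and $\sigma_1(G)\ge 4n-3k+3$, and equality holds in either bound if and only if $G=K_{k-1}\vee\overline{K}_{n+1-k}$. (b) If $\omega(G)=k$, then the same two bounds hold, and equality holds in either bound if and only if $G$ has exactly $k-1$ dominating vertices.
   Context: All graphs are finite, simple, undirected. For a connected graph $G$ and $u\in V(G)$, $\varepsilon_G(u)=\max_{v} d_G(u,v)$; $\sigma_0(G)=\frac1{|V(G)|}\sum_u\varepsilon_G(u)$, $\sigma_1(G)=\sum_u\varepsilon_G(u)^2$. $\chi(G)$ is the chromatic number and $\omega(G)$ the clique number. A dominating vertex is a vertex adjacent to all other vertices. $K_r$ is the complete graph, $\overline{K}_r$ the edgeless graph on $r$ vertices, and $G\vee H$ (the join) is obtained from the disjoint union of $G$ and $H$ by adding all edges between $V(G)$ and $V(H)$. *)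

(* Defs.v *)
(* A finite simple graph on a finType T is a relation
   e : rel T that is symmetric and irreflexive. *)
From mathcomp Require Import all_boot all_order all_algebra.
Set Implicit Arguments. Unset Strict Implicit. Unset Printing Implicit Defensive.
Import GRing.Theory Num.Theory.

Section Graphs.
Variable T : finType.
Variable e : rel T.

Definition connected_graph : Prop := forall x y : T, connect e x y.

Fixpoint nball (k : nat) (u : T) : {set T} :=
  match k with
  | 0 => [set u]
  | k'.+1 => nball k' u :|: [set y | [exists x in nball k' u, e x y]]
  end.

(* graph distance: least k with v in nball k u (search up to #|T|, which
   suffices in a connected graph) *)
Definition dist (u v : T) : nat :=
  find (fun k => v \in nball k u) (iota 0 #|T|.+1).

Definition ecc (u : T) : nat := \max_(v : T) dist u v.

Definition sigma0 : rat := (\sum_(u : T) ecc u)%:R / #|T|%:R.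
Definition sigma1 : nat := \sum_(u : T) (ecc u) ^ 2.

Definition colorable (k : nat) : bool :=
  [exists f : {ffun T -> 'I_k}, [forall x, forall y, e x y ==> (f x != f y)]].
(* least k such that G is k-colorable (always <= #|T| for simple graphs) *)
Definition chromatic_number : nat := find colorable (iota 0 #|T|.+1).

Definition is_clique (A : {set T}) : bool :=
  [forall x in A, forall y in A, (x != y) ==> e x y].
Definition clique_number : nat := \max_(A : {set T} | is_clique A) #|A|.

Definition dominating (v : T) : bool := [forall u, (u != v) ==> e v u].
End Graphs.

Definition graph_iso (T T' : finType) (e : rel T) (e' : rel T') : Prop :=
  exists f : T -> T', bijective f /\ forall x y, e' (f x) (f y) = e x y.

Definition complete_rel (T : finType) : rel T := fun x y => x != y.
Definition empty_rel (T : finType) : rel T := fun _ _ => false.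
Definition join_rel (A B : finType) (eA : rel A) (eB : rel B) : rel (A + B)%type :=
  fun x y => match x, y with
             | inl a, inl a' => eA a a'
             | inr b, inr b' => eB b b'
             | _, _ => true
             end.
Definition Kjoin_coK (r s : nat) : rel ('I_r + 'I_s)%type :=
  join_rel (@complete_rel 'I_r) (@empty_rel 'I_s).

(* Main.v *)
Require Import Defs.
From mathcomp Require Import all_boot all_order all_algebra.
From mathcomp Require Import zify.
Import GRing.Theory Num.Theory.
Set Implicit Arguments. Unset Strict Implicit. Unset Printing Implicit Defensive.

Lemma exists_other (U : finType) (j : U) : 1 < #|U| -> exists j', j' != j.
Proof.
move=> hU; case: (pickP (predC1 j)) => [j' hj'|h]; first by exists j'.
exfalso; move: hU; rewrite ltnNge => /negP; apply.
rewrite -(card1 j); apply: subset_leq_card; apply/subsetP => y _.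
by move: (h y) => /= /negbFE; rewrite inE.
Qed.

Section G.
Variable T : finType.
Variable e : rel T.
Hypothesis esym : symmetric e.
Hypothesis eirr : irreflexive e.

Local Notation Dset := [set v | dominating e v].

Lemma nball_mono i m u : nball e i u \subset nball e (i + m) u.
Proof.
elim: m => [|m IH]; first by rewrite addn0.
rewrite addnS /=; apply: subset_trans IH _; exact: subsetUl.
Qed.

Lemma dist_le u v j : j <= #|T| -> (dist e u v <= j) = (v \in nball e j u).
Proof.
move=> hj; rewrite /dist; set a := (fun k => v \in nball e k u).
set s := iota 0 #|T|.+1.
apply/idP/idP => [hf|hv].
- have hs : has a s by rewrite has_find size_iota; apply: leq_ltn_trans hf _.
  have := nth_find 0 hs; rewrite nth_iota; last by move: hs; rewrite has_find size_iota.
  rewrite add0n /a => hv.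
  have := subsetP (nball_mono (find a s) (j - find a s) u) v hv.
  by rewrite subnKC.
- rewrite leqNgt; apply/negP => hlt.
  have := before_find 0 hlt; rewrite nth_iota ?ltnS // add0n /a hv.
  done.
Qed.

Lemma in_nball1 u v : (v \in nball e 1 u) = (v == u) || e u v.
Proof.
rewrite /= !inE; congr (_ || _); apply/existsP/idP => [[x]|h].
- by rewrite ?inE => /andP[/eqP ->].
- by exists u; rewrite ?inE eqxx.
Qed.

Lemma in_nball2 u x v : e u x -> e x v -> v \in nball e 2 u.
Proof.
move=> h1 h2.
change (nball e 2 u) with (nball e 1 u :|: [set y | [exists z in nball e 1 u, e z y]]).
rewrite inE; apply/orP; right; rewrite inE; apply/existsP; exists x.
by rewrite in_nball1 h1 orbT h2.
Qed.

Lemma ecc_le u j : j <= #|T| -> (ecc e u <= j) = [forall v, v \in nball e j u].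
Proof.
move=> hj; apply/bigmax_leqP/forallP => h v.
- by rewrite -dist_le //; apply: h.
- by move=> _; rewrite dist_le.
Qed.

Lemma ecc_le1 u : (ecc e u <= 1) = dominating e u.
Proof.
have hT : 0 < #|T| by apply/card_gt0P; exists u.
rewrite ecc_le //; apply/idP/idP => /forallP h; apply/forallP => v; move: (h v).
- by rewrite in_nball1 => /orP[/eqP->|->]; rewrite ?eqxx ?implybT.
- by rewrite in_nball1; case: eqP.
Qed.

Lemma ecc_ge1 u : 1 < #|T| -> 0 < ecc e u.
Proof.
move=> hT; have [v hv] := exists_other u hT.
rewrite ltnNge ecc_le //.
by apply/negP => /forallP /(_ v); rewrite /= inE; apply/negP.
Qed.

Lemma dom_adj w x : dominating e w -> x != w -> e w x.
Proof. by move/forallP => /(_ x) /implyP. Qed.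

Lemma ecc_le2 u w : 1 < #|T| -> dominating e w -> ecc e u <= 2.
Proof.
move=> hT hw; rewrite ecc_le //; apply/forallP => v.
case: (eqVneq v u) => [->|hvu].
  by apply: (subsetP (nball_mono 0 2 u)); rewrite /= inE.
case: (eqVneq u w) => [huw|huw].
  rewrite huw in hvu *.
  by apply: (subsetP (nball_mono 1 1 _)); rewrite in_nball1 dom_adj ?orbT.
case: (eqVneq v w) => [hvw|hvw].
  by apply: (subsetP (nball_mono 1 1 u)); rewrite in_nball1 hvw esym dom_adj ?orbT.
by apply: (@in_nball2 u w); [rewrite esym; apply: dom_adj | apply: dom_adj].
Qed.


Lemma sum_ge (f g : T -> nat) c : (forall u, c <= f u + g u) -> c * #|T| <= \sum_u f u + \sum_u g u.
Proof. move=> h; rewrite -big_split /= mulnC -sum_nat_const; apply: leq_sum => u _; exact: h. Qed.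

Lemma sum_eq (f g : T -> nat) c : (forall u, f u + g u = c) -> \sum_u f u + \sum_u g u = c * #|T|.
Proof. move=> h; rewrite -big_split /= mulnC -sum_nat_const; apply: eq_bigr => u _; exact: h. Qed.

Lemma Dcard : #|Dset| = \sum_u (dominating e u : nat).
Proof.
rewrite -sum1_card big_mkcond /=; apply: eq_bigr => u _; rewrite inE.
by case: (dominating e u).
Qed.

Lemma ecc_cases u : 1 < #|T| -> (dominating e u -> ecc e u = 1) /\ (~~ dominating e u -> 2 <= ecc e u).
Proof.
move=> hT; split => h; first by apply/eqP; rewrite eqn_leq ecc_le1 h ecc_ge1.
by rewrite ltnNge ecc_le1.
Qed.

Lemma S_bounds : 1 < #|T| ->
  [/\ 2 * #|T| <= \sum_u ecc e u + #|Dset|,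
      4 * #|T| <= \sum_u ecc e u ^ 2 + 3 * #|Dset|,
      0 < #|Dset| -> \sum_u ecc e u + #|Dset| = 2 * #|T| &
      0 < #|Dset| -> \sum_u ecc e u ^ 2 + 3 * #|Dset| = 4 * #|T|].
Proof.
move=> hT.
split.
- rewrite Dcard; apply: sum_ge => u; have [h1 h2] := ecc_cases u hT.
  case hd: (dominating e u); first by rewrite h1.
  by rewrite addn0; apply: h2; rewrite hd.
- rewrite Dcard big_distrr /=; apply: sum_ge => u; have [h1 h2] := ecc_cases u hT.
  case hd: (dominating e u); first by rewrite h1.
  rewrite ?muln0 addn0 -[4]/(2 ^ 2) leq_exp2r //; apply: h2; by rewrite hd.
- move=> /card_gt0P [w]; rewrite inE => hw.
  rewrite Dcard ?big_distrr /=; apply: sum_eq => u; have [h1 h2] := ecc_cases u hT.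
  case hd: (dominating e u); first by rewrite h1.
  have h3 : ecc e u = 2 by apply/eqP; rewrite eqn_leq (ecc_le2 _ hT hw) h2 // hd.
  by rewrite h3.
- move=> /card_gt0P [w]; rewrite inE => hw.
  rewrite Dcard ?big_distrr /=; apply: sum_eq => u; have [h1 h2] := ecc_cases u hT.
  case hd: (dominating e u); first by rewrite h1.
  have h3 : ecc e u = 2 by apply/eqP; rewrite eqn_leq (ecc_le2 _ hT hw) h2 // hd.
  by rewrite h3.
Qed.

Lemma Dset_clique x : is_clique e (x |: Dset).
Proof.
apply/forallP => a; apply/implyP => ha; apply/forallP => b; apply/implyP => hb.
move: ha hb; rewrite !inE => /orP[/eqP ->|da] /orP[/eqP ->|db]; rewrite ?eqxx //=; apply/implyP => hab.
- by rewrite esym; apply: dom_adj => //; rewrite eq_sym.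
- by apply: dom_adj => //; rewrite eq_sym.
- by apply: dom_adj => //; rewrite eq_sym.
Qed.

Lemma Dset_clique0 : is_clique e Dset.
Proof.
apply/forallP => a; apply/implyP => ha; apply/forallP => b; apply/implyP => hb; apply/implyP => hab.
by move: ha; rewrite inE => da; apply: dom_adj => //; rewrite eq_sym.
Qed.

Lemma D_lt (k : nat) (hC : forall C, is_clique e C -> #|C| <= k) : k < #|T| -> #|Dset| < k.
Proof.
move=> hkT; case: (pickP (fun x => x \notin Dset)) => [x hx | h].
- by have := hC _ (Dset_clique x); rewrite cardsU1 hx add1n.
- have h1 : #|T| <= #|Dset|.
    by apply: subset_leq_card; apply/subsetP => y _; move: (h y) => /= /negbFE.
  have := hC _ Dset_clique0; lia.
Qed.


Lemma colorable_card : colorable e #|T|.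
Proof.
apply/existsP; exists [ffun x => enum_rank x]; apply/forallP => x; apply/forallP => y.
apply/implyP => hxy; rewrite !ffunE (inj_eq enum_rank_inj).
by apply/eqP => hx; rewrite hx eirr in hxy.
Qed.

Lemma chi_colorable : colorable e (chromatic_number e).
Proof.
rewrite /chromatic_number.
have hs : has (colorable e) (iota 0 #|T|.+1).
  apply/hasP; exists #|T|; first by rewrite mem_iota add0n ltnS leqnn.
  exact: colorable_card.
have := nth_find 0 hs; rewrite nth_iota ?add0n //.
by move: hs; rewrite has_find size_iota.
Qed.

Lemma clique_inj (j : nat) (f : {ffun T -> 'I_j}) C :
  [forall x, forall y, e x y ==> (f x != f y)] -> is_clique e C -> {in C &, injective f}.
Proof.
move=> /forallP hf /forallP hC x y hx hy hxy; case: (eqVneq x y) => // nxy; exfalso.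
move: (hC x); rewrite hx /= => /forallP /(_ y); rewrite hy nxy /= => exy.
by move: (hf x) => /forallP /(_ y); rewrite exy hxy eqxx.
Qed.

Lemma clique_le_col j C : is_clique e C -> colorable e j -> #|C| <= j.
Proof.
move=> hC /existsP [f hf].
rewrite -(card_in_imset (clique_inj hf hC)).
by apply: leq_trans (max_card _) _; rewrite card_ord.
Qed.

Lemma clique_le_omega C : is_clique e C -> #|C| <= clique_number e.
Proof. by move=> hC; rewrite /clique_number; exact: leq_bigmax_cond. Qed.


Lemma indep k (hcol : colorable e k) (hk : 0 < k) (hD : #|Dset| = k.-1) x y :
  x \notin Dset -> y \notin Dset -> e x y = false.
Proof.
move=> hx hy; apply/negP => exy; case/existsP: hcol => f hf.
have hinj := clique_inj hf (Dset_clique x).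
have hcard : #|f @: (x |: Dset)| = k by rewrite card_in_imset // cardsU1 hx hD; lia.
have hall : f @: (x |: Dset) = setT.
  by apply/eqP; rewrite eqEcard subsetT cardsT card_ord hcard leqnn.
have : f y \in f @: (x |: Dset) by rewrite hall inE.
case/imsetP => z; rewrite !inE => /orP[/eqP ->|dz] hfz.
- by move/forallP: hf => /(_ x) /forallP /(_ y); rewrite exy hfz eqxx.
- have hyz : y != z by apply/eqP => yz; move: hy; rewrite yz inE dz.
  have ezy := dom_adj dz hyz.
  by move/forallP: hf => /(_ z) /forallP /(_ y); rewrite ezy hfz eqxx.
Qed.

Lemma iso_of a b (hDa : #|Dset| = a) (hb : #|~: Dset| = b)
  (hind : forall x y, x \notin Dset -> y \notin Dset -> e x y = false) :
  graph_iso e (@Kjoin_coK a b).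
Proof.
pose g (p : 'I_a + 'I_b) : T := match p with
  | inl i => enum_val (cast_ord (sym_eq hDa) i)
  | inr j => enum_val (cast_ord (sym_eq hb) j) end.
have gD i : g (inl i) \in Dset by apply: enum_valP.
have gC j : g (inr j) \in ~: Dset by apply: enum_valP.
have ginj : injective g.
  case=> [i|i] [j|j] /= h; rewrite /g in h.
  - by have := enum_val_inj h => /cast_ord_inj ->.
  - by have := gD i; rewrite /g h => hD1; have := gC j; rewrite /g in_setC hD1.
  - by have := gD j; rewrite /g -h => hD1; have := gC i; rewrite /g in_setC hD1.
  - by have := enum_val_inj h => /cast_ord_inj ->.
have gbij : bijective g.
  by apply: (inj_card_bij ginj); rewrite card_sum !card_ord -hDa -hb cardsC leqnn.
have gDC i j : g (inr j) != g (inl i).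
  by apply/eqP => h; have := gC j; rewrite h in_setC gD.
have gedge p q : e (g p) (g q) = @Kjoin_coK a b p q.
  case: p q => [i|i] [j|j] /=.
  - rewrite /complete_rel; case: (eqVneq i j) => [->|hij]; first by rewrite eirr.
    apply: dom_adj; first by have := gD i; rewrite inE.
    by apply/eqP => hg; move: (ginj (inl j) (inl i) hg) => [hji]; rewrite hji eqxx in hij.
  - apply: dom_adj; first by have := gD i; rewrite inE.
    exact: gDC.
  - rewrite esym; apply: dom_adj; first by have := gD j; rewrite inE.
    exact: gDC.
  - by rewrite /empty_rel; apply: hind; rewrite -in_setC; apply: gC.
case: gbij => h hgh hhg.
exists h; split; first by exists g.
by move=> x y; rewrite -gedge !hhg.
Qed.

Lemma Dset_of_iso a b (hb : 1 < b) : graph_iso e (@Kjoin_coK a b) -> #|Dset| = a.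
Proof.
case=> f [[g hfg hgf] hf].
have key x : dominating e x = (if f x is inl _ then true else false).
  case hx: (f x) => [i|j].
  - apply/forallP => u; apply/implyP => hu; rewrite -hf hx.
    case hu': (f u) => [j|j] //=.
    rewrite /complete_rel; apply: contra hu => /eqP hij.
    by rewrite -(inj_eq (can_inj hfg)) hx hu' hij eqxx.
  - apply/negP => hd.
    have [j' hj'] := exists_other j (ltac:(by rewrite card_ord)).
    have hne : g (inr j') != x.
      by apply/eqP => hgx; move: hx; rewrite -hgx hgf => [[]] h; rewrite h eqxx in hj'.
    by have := dom_adj hd hne; rewrite -hf hgf hx.
have hL : Dset = g @: [set inl i | i : 'I_a].
  apply/setP => x; rewrite inE key.
  case hx: (f x) => [i|j].
    symmetry; apply/imsetP; exists (inl i); first by apply/imsetP; exists i.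
    by rewrite -hx hfg.
  symmetry; apply/negP; case/imsetP => p /imsetP [i _ ->] hxg.
  by move: hx; rewrite hxg hgf.
rewrite hL card_imset; last exact: can_inj hgf.
rewrite card_imset; last by move=> i j [].
by rewrite card_ord.
Qed.

End G.

Lemma ratconv (N a s : nat) : 0 < N -> a <= 2 * N ->
  ((2 - a%:R / N%:R <= s%:R / N%:R :> rat)%R = (2 * N - a <= s)) /\
  ((s%:R / N%:R = 2 - a%:R / N%:R :> rat)%R <-> s = 2 * N - a).
Proof.
move=> hN0 ha.
have hN : (N%:R : rat) != 0%R by rewrite pnatr_eq0 -lt0n.
have E : (2 - a%:R / N%:R : rat)%R = ((2 * N - a)%:R / N%:R)%R.
  by rewrite natrB // natrM mulrBl mulfK.
rewrite E; split; first by rewrite ler_pM2r ?invr_gt0 ?ltr0n // ler_nat.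
split => [h|->//]; apply/eqP; rewrite -(eqr_nat rat); apply/eqP.
exact: (mulIf (invr_neq0 hN) h).
Qed.

Lemma core (T : finType) (e : rel T) (esym : symmetric e) n k
  (hn : #|T| = n) (hk2 : 2 <= k) (hkn : k <= n - 1)
  (hC : forall C, is_clique e C -> #|C| <= k) :
  [/\ 2 * n - (k - 1) <= \sum_u ecc e u, 4 * n + 3 - 3 * k <= sigma1 e,
      (\sum_u ecc e u = 2 * n - (k-1) <-> #|[set v | dominating e v]| = k - 1) &
      (sigma1 e = 4 * n + 3 - 3 * k <-> #|[set v | dominating e v]| = k - 1)].
Proof.
have hT : 1 < #|T| by rewrite hn; lia.
have hD : #|[set v | dominating e v]| < k by apply: (D_lt esym hC); rewrite hn; lia.
have [h1 h2 h3 h4] := S_bounds esym hT.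
rewrite /sigma1; rewrite hn in h1 h2 h3 h4.
move: h1 h2 h3 h4 hD.
set S0 := \sum_u ecc e u; set S1 := \sum_u ecc e u ^ 2; set D := #|_|.
move=> h1 h2 h3 h4 hD.
case: (posnP D) => [hD0|hDp].
- split; try lia; split => h; lia.
- have := h3 hDp; have := h4 hDp => {h3 h4} h4 h3.
  split; try lia; split => h; lia.
Qed.

Theorem theorem4p2 (T : finType) (e : rel T) (n k : nat)
  (esym : symmetric e) (eirr : irreflexive e)
  (hn : #|T| = n) (hk2 : 2 <= k) (hkn : k <= n - 1)
  (hconn : connected_graph e) :
  (chromatic_number e = k ->
     ((2 - (k - 1)%N%:R / n%:R <= sigma0 e)%R
      /\ 4 * n + 3 - 3 * k <= sigma1 e
      /\ (sigma0 e = (2 - (k - 1)%N%:R / n%:R)%R <-> graph_iso e (@Kjoin_coK (k - 1) (n + 1 - k)))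
      /\ (sigma1 e = 4 * n + 3 - 3 * k <-> graph_iso e (@Kjoin_coK (k - 1) (n + 1 - k)))))
  /\
  (clique_number e = k ->
     ((2 - (k - 1)%N%:R / n%:R <= sigma0 e)%R
      /\ 4 * n + 3 - 3 * k <= sigma1 e
      /\ (sigma0 e = (2 - (k - 1)%N%:R / n%:R)%R <-> #|[set v | dominating e v]| = k - 1)
      /\ (sigma1 e = 4 * n + 3 - 3 * k <-> #|[set v | dominating e v]| = k - 1))).
Proof.
have hn0 : 0 < n by lia.
have [r1 r2] := ratconv (\sum_u ecc e u) hn0 (ltac:(lia) : k - 1 <= 2 * n).
have s0E : sigma0 e = ((\sum_u ecc e u)%:R / n%:R)%R by rewrite /sigma0 hn.
split => hk.
- have hC : forall C, is_clique e C -> #|C| <= k.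
    by move=> C hC; rewrite -hk; exact: (clique_le_col hC (chi_colorable eirr)).
  have [c1 c2 c3 c4] := core esym hn hk2 hkn hC.
  have hiso : #|[set v | dominating e v]| = k - 1 <-> graph_iso e (@Kjoin_coK (k - 1) (n + 1 - k)).
    split => [hD|hI]; last by apply: Dset_of_iso hI; lia.
    apply: (iso_of esym eirr) => //.
      by have := cardsC [set v | dominating e v]; rewrite hD hn; lia.
    move=> x y hx hy; apply: (@indep _ _ esym k) => //; first by rewrite -hk; exact: (chi_colorable eirr).
      lia.
    by rewrite hD; lia.
  rewrite s0E r1; split => //; split => //; split.
  + by rewrite r2; apply: iff_trans hiso.
  + by apply: iff_trans hiso.
- have hC : forall C, is_clique e C -> #|C| <= k.
    by move=> C hC; rewrite -hk; apply: clique_le_omega.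
  have [c1 c2 c3 c4] := core esym hn hk2 hkn hC.
  by rewrite s0E r1 r2; split.
Qed.
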